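(* Let $n$ and $m$ be positive integers and $0<\theta\le 1$, and put $\phi = m(1-\theta)/\theta$. Then for every $x\in\{0,1,\dots,n\}$, $$\binom{n}{x}\theta^x(1-\theta)^{n-x} = \sum_{k=0}^{x}\mathrm{Spillage}(x-k\mid n,k,\phi)\cdot \mathrm{Occ}(k\mid n,m,\theta).$$
   Context: $S(j,k)$ denotes the (central) Stirling numbers of the second kind and $(m)_k = m(m-1)\cdots(m-k+1)$ the falling factorial. The noncentral Stirling numbers of the second kind are $S(n,k,\phi) = \sum_{r=0}^{n-k}\binom{n}{k+r}\phi^{n-k-r}S(k+r,k)$. The spillage mass function, for $0\le k\le n$ and $0<\phi<\infty$, is $\mathrm{Spillage}(r\mid n,k,\phi) = \binom{n}{k+r}\phi^{n-k-r}S(k+r,k)/S(n,k,\phi)$ for $r=0,\dots,n-k$; for $\phi=0$ it is by convention the point mass $\mathrm{Spillage}(r\mid n,k,0)=\mathbb{I}(r=n-k)$. The (extended) occupancy mass function is $\mathrm{Occ}(k\mid n,m,\theta) = \frac{\theta^n}{m^n}(m)_k\,S\!\left(n,k,m\frac{1-\theta}{\theta}\right)$ for $k=0,\dots,n$ (for $\theta=1$ this reads $(m)_kS(n,k)/m^n$). *)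

(* Defs.v *)
From mathcomp Require Import all_boot all_order all_algebra.
Set Implicit Arguments. Unset Strict Implicit. Unset Printing Implicit Defensive.
Import Order.TTheory GRing.Theory Num.Theory.
Local Open Scope ring_scope.

Fixpoint stirling2 (n k : nat) : nat :=
  match n, k with
  | O, O => 1%N
  | O, S _ => 0%N
  | S _, O => 0%N
  | S n', S k' => (k'.+1 * stirling2 n' k'.+1 + stirling2 n' k')%N
  end.

Definition nc_stirling2 {R : numFieldType} (n k : nat) (phi : R) : R :=
  \sum_(0 <= r < (n - k).+1) ('C(n, k + r))%:R * phi ^+ (n - k - r) * (stirling2 (k + r) k)%:R.

Definition spillage {R : numFieldType} (r n k : nat) (phi : R) : R :=
  if phi == 0 then (r == (n - k)%N)%:R
  else if (r <= n - k)%N then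
    ('C(n, k + r))%:R * phi ^+ (n - k - r) * (stirling2 (k + r) k)%:R / nc_stirling2 n k phi
  else 0.

Definition occ {R : numFieldType} (k n m : nat) (theta : R) : R :=
  theta ^+ n / (m%:R) ^+ n * (m ^_ k)%:R * nc_stirling2 n k (m%:R * (1 - theta) / theta).

(* Main.v *)
Require Import Defs.
From mathcomp Require Import all_boot all_order all_algebra.
From mathcomp Require Import ring lra zify.
Import Order.TTheory GRing.Theory Num.Theory.

Lemma stir_gt x k : (x < k)%N -> stirling2 x k = 0%N.
Proof.
elim: x k => [|x IH] [|k] //= H.
by rewrite !IH //; lia.
Qed.

Lemma stir_diag k : stirling2 k k = 1%N.
Proof. elim: k => [//|k IH] /=. by rewrite IH stir_gt ?muln0. Qed.

Lemma mul_ffact m k : (m * m ^_ k = m ^_ k.+1 + k * m ^_ k)%N.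
Proof.
rewrite ffactnSr; case: (leqP k m) => H.
  by rewrite [k * _]mulnC -mulnDr subnK // mulnC.
by rewrite ffact_small // !muln0.
Qed.

Lemma sum_ffact_stir m x N : (x < N)%N ->
  (\sum_(0 <= k < N) m ^_ k * stirling2 x k = m ^ x)%N.
Proof.
elim: x N => [|x IH] [|N] //= H.
  rewrite big_nat_recl //= big1_seq ?ffactn0 //= => i _.
  by rewrite muln0.
rewrite expnS -(IH N.+1) ?(ltnW H) // big_distrr /=.
rewrite big_nat_recl //= muln0 add0n.
under eq_bigr do rewrite mulnDr.
rewrite big_split /=.
under [in RHS]eq_bigr do rewrite mulnA mul_ffact mulnDl.
rewrite big_split /= addnC; congr (_ + _).
  transitivity (\sum_(0 <= i < N.+1) m ^_ i.+1 * stirling2 x i)%N; last by rewrite big_nat_recl.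
  rewrite big_nat_recr //= [stirling2 x N]stir_gt ?muln0 ?addn0 //.
rewrite big_nat_recl //= mul0n add0n; apply: eq_bigr => i _; ring.
Qed.

Local Open Scope ring_scope.

Lemma nc0 (R : numFieldType) n k : (k <= n)%N ->
  nc_stirling2 n k (0 : R) = (stirling2 n k)%:R.
Proof.
move=> kn; rewrite /nc_stirling2 big_nat_recr //= subnKC // subnn expr0 mulr1.
rewrite binn mul1r big1_seq ?add0r // => r; rewrite mem_index_iota => /andP[_ rk].
rewrite expr0n; have -> : (n - k - r == 0)%N = false by apply/eqP; lia.
by rewrite mulr0 mul0r.
Qed.

Lemma ncpos (R : numFieldType) n k (phi : R) : (k <= n)%N -> 0 < phi ->
  0 < nc_stirling2 n k phi.
Proof.
move=> kn p0; rewrite /nc_stirling2 big_nat_recl // addn0 stir_diag mulr1.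
apply: ltr_wpDr.
  apply: sumr_ge0 => i _; apply: mulr_ge0; [apply: mulr_ge0|]; by rewrite ?ler0n ?exprn_ge0 ?ltW.
by apply: mulr_gt0; rewrite ?exprn_gt0 // ltr0n bin_gt0.
Qed.

Theorem theorem4 (R : realFieldType) (n m : nat) (theta : R) :
  (0 < n)%N -> (0 < m)%N -> 0 < theta -> theta <= 1 ->
  let phi := m%:R * (1 - theta) / theta in
  forall x : nat, (x <= n)%N ->
    ('C(n, x))%:R * theta ^+ x * (1 - theta) ^+ (n - x)
    = \sum_(0 <= k < x.+1) spillage (x - k) n k phi * occ k n m theta.
Proof.
move=> n0 m0 t0 t1 phi x xn.
have mR : (m%:R : R) != 0 by rewrite pnatr_eq0 -lt0n.
have tR : theta != 0 by rewrite gt_eqF.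
have [tlt|tge] := ltP theta 1.
  have phi0 : 0 < phi.
    by rewrite /phi; apply: divr_gt0 => //; apply: mulr_gt0; rewrite ?ltr0n // subr_gt0.
  have phiN : (phi == 0) = false by rewrite gt_eqF.
  rewrite (eq_big_nat _ _ (F2 := fun k => ('C(n,x))%:R * phi ^+ (n - x) * theta ^+ n
       / m%:R ^+ n * (m ^_ k * stirling2 x k)%:R)); last first.
    move=> k /andP[_ kx]; rewrite /spillage phiN ifT; last by lia.
    rewrite subnKC; last by lia.
    have -> : (n - k - (x - k) = n - x)%N by lia.
    rewrite /occ -/phi natrM.
    have kn : (k <= n)%N by lia.
    have := @ncpos _ n k phi kn phi0.
    move: (nc_stirling2 n k phi) => c c0.
    field; by rewrite expf_neq0 // gt_eqF.
  rewrite -mulr_sumr -natr_sum sum_ffact_stir // natrX.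
  have [d ->] : exists d, n = (x + d)%N by exists (n - x)%N; rewrite subnKC.
  rewrite addKn /phi !exprD expr_div_n exprMn.
  field; by rewrite ?expf_neq0.
have t1' : theta = 1 by apply: le_anti; rewrite t1 tge.
have ph0 : phi = 0 by rewrite /phi t1' subrr mulr0 mul0r.
rewrite ph0 /occ t1' subrr mulr0 mul0r expr1n.
have [xlt|xge] := ltnP x n.
  rewrite expr0n; have -> : (n - x == 0)%N = false by apply/eqP; lia.
  rewrite mulr0 big1_seq // => k; rewrite mem_index_iota => /andP[_ kx].
  rewrite /spillage eqxx.
  have -> : (x - k == n - k)%N = false by apply/eqP; lia.
  by rewrite mul0r.
have xe : x = n by apply/eqP; rewrite eqn_leq xn xge.
subst x; rewrite subnn expr0 binn !mulr1.
rewrite (eq_big_nat _ _ (F2 := fun k => (m%:R ^+ n)^-1 * (m ^_ k * stirling2 n k)%:R)); last first.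
  move=> k /andP[_ kx]; rewrite /spillage eqxx eqxx mul1r nc0; last by lia.
  by rewrite natrM !mulrA expr1n mul1r.
rewrite /= -mulr_sumr -natr_sum sum_ffact_stir // natrX.
by rewrite mulVf // expf_neq0.
Qed.
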